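(* (i) Let $\hbar\ne0$ and let $V$ be a $Y_\hbar(\mathfrak g)$-module on which $\mathfrak h$ acts semisimply with finite-dimensional weight spaces. Then for every weight $\mu$ of $V$ the series $\xi_i(u)\in\mathrm{End}(V_\mu)[[u^{-1}]]$ and $x_i^\pm(u)\in\mathrm{Hom}(V_\mu,V_{\mu\pm\alpha_i})[[u^{-1}]]$ are expansions at $u=\infty$ of rational functions of $u$. Specifically, with $t_{i,1}=\xi_{i,1}-\frac\hbar2\xi_{i,0}^2$, $x_i^\pm(u)=\hbar u^{-1}\left(1\mp\frac{\mathrm{ad}(t_{i,1})}{2d_iu}\right)^{-1}x^\pm_{i,0}$ and $\xi_i(u)=1+[x_i^+(u),x^-_{i,0}]$. (ii) Let $\mathcal V$ be a $U_q(L\mathfrak g)$-module on which the $K_h$ act semisimply with finite-dimensional weight spaces. Then for every weight $\mu$ and $\varepsilon\in\{\pm\}$ the series $\Psi_i(z)^\pm\in\mathrm{End}(\mathcal V_\mu)[[z^{\mp1}]]$ and $\mathcal X_i^\varepsilon(z)^\pm\in\mathrm{Hom}(\mathcal V_\mu,\mathcal V_{\mu+\varepsilon\alpha_i})[[z^{\mp1}]]$ are the expansions at $z=\infty$ and $z=0$ of rational functions $\Psi_i(z)$, $\mathcal X_i^\varepsilon(z)$. Specifically, with $H_{i,\pm1}=\pm\Psi^\mp_{i,0}\Psi^\pm_{i,\pm1}/(q_i-q_i^{-1})$, $\mathcal X_i^\varepsilon(z)=\left(1-\varepsilon\frac{\mathrm{ad}(H_{i,1})}{[2]_{q_i}z}\right)^{-1}\mathcal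 X^\varepsilon_{i,0}=-z\left(1-\varepsilon z\frac{\mathrm{ad}(H_{i,-1})}{[2]_{q_i}}\right)^{-1}\mathcal X^\varepsilon_{i,-1}$ and $\Psi_i(z)=\Psi^-_{i,0}+(q_i-q_i^{-1})[\mathcal X_i^+(z),\mathcal X^-_{i,0}]$.
   Context: $\mathfrak g$ is the Kac–Moody algebra of a symmetrisable generalized Cartan matrix $(a_{ij})_{i,j\in I}$ with relatively prime positive symmetrising integers $d_i$ and realization $(\mathfrak h,\{\alpha_i\},\{\alpha_i^\vee\})$; $q\in\mathbb C^\times$ is not a root of unity, $q_i=q^{d_i}$, $[2]_{q_i}=q_i+q_i^{-1}$. $Y_\hbar(\mathfrak g)$ is generated by $h\in\mathfrak h,\xi_{i,r},x^\pm_{i,r}$ with relations (Y0) $\xi_{i,0}=d_i\alpha_i^\vee$; (Y1) $\xi$'s and $\mathfrak h$ commute; (Y2) $[h,x^\pm_{j,s}]=\pm\alpha_j(h)x^\pm_{j,s}$; (Y3) $[\xi_{i,r+1},x^\pm_{j,s}]-[\xi_{i,r},x^\pm_{j,s+1}]=\pm\frac{\hbar d_ia_{ij}}2(\xi_{i,r}x^\pm_{j,s}+x^\pm_{j,s}\xi_{i,r})$; (Y4) the same with $\xi_{i,\cdot}$ replaced by $x^\pm_{i,\cdot}$; (Y5) $[x^+_{i,r},x^-_{j,s}]=\delta_{ij}\xi_{i,r+s}$; (Y6) Serre relations. $\xi_i(u)=1+\hbar\sum_r\xi_{i,r}u^{-r-1}$, $x_i^\pm(u)=\hbar\sum_rx^\pm_{i,r}u^{-r-1}$.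 $U_q(L\mathfrak g)$ is generated by $K_h,\Psi^\pm_{i,\pm r},\mathcal X^\pm_{i,k}$ with: (QL0) $\Psi^\pm_{i,0}=K_{\pm d_i\alpha_i^\vee}$; (QL1) $\Psi$'s and $K$'s commute, $K_hK_{h'}=K_{h+h'}$, $K_0=1$; (QL2) $K_h\mathcal X^\pm_{i,k}K_h^{-1}=q^{\pm\alpha_i(h)}\mathcal X^\pm_{i,k}$; (QL3) $\Psi^\varepsilon_{i,k+1}\mathcal X^\pm_{j,l}-q_i^{\pm a_{ij}}\mathcal X^\pm_{j,l}\Psi^\varepsilon_{i,k+1}=q_i^{\pm a_{ij}}\Psi^\varepsilon_{i,k}\mathcal X^\pm_{j,l+1}-\mathcal X^\pm_{j,l+1}\Psi^\varepsilon_{i,k}$; (QL4) analogous relation for $\mathcal X\mathcal X$; (QL5) $[\mathcal X^+_{i,k},\mathcal X^-_{j,l}]=\delta_{ij}\frac{\Psi^+_{i,k+l}-\Psi^-_{i,k+l}}{q_i-q_i^{-1}}$ ($\Psi^\pm_{i,\mp k}=0$ for $k\ge1$); (QL6) $q_i$-Serre relations. Series: $\Psi_i(z)^+=\sum_{r\ge0}\Psi^+_{i,r}z^{-r}$, $\Psi_i(z)^-=\sum_{r\ge0}\Psi^-_{i,-r}z^{r}$, $\mathcal X_i^\pm(z)^+=\sum_{k\ge0}\mathcal X^\pm_{i,k}z^{-k}$, $\mathcal X_i^\pm(z)^-=-\sum_{k<0}\mathcal X^\pm_{i,k}z^{-k}$. *)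

(* Defs.v *)
From mathcomp Require Import all_boot all_order all_algebra all_fingroup.
From mathcomp Require Import reals complex.
Set Implicit Arguments.
Unset Strict Implicit.
Unset Printing Implicit Defensive.
Import Order.TTheory GRing.Theory Num.Theory.
Local Open Scope ring_scope.

(* Cartan data.  I = 'I_n ; h = 'rV[C]_m ; alpha_j(h) = (h *m rts) 0 j ;
   alpha_i^vee = row i cor.  Weights of h are column vectors mu : 'cV_m,
   mu(h) = (h *m mu) 0 0.                                               *)

Definition is_GCM (n : nat) (A : 'M[int]_n) : Prop :=
  [/\ forall i, A i i = 2,
      forall i j, i != j -> A i j <= 0
    & forall i j, A i j = 0 <-> A j i = 0].

Definition is_symmetrising (n : nat) (A : 'M[int]_n) (d : 'I_n -> nat) : Prop :=
  [/\ forall i, (0 < d i)%N,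
      forall i j, (d i)%:Z * A i j = (d j)%:Z * A j i
    & \big[gcdn/0%N]_(i < n) d i = 1%N].

Definition is_realization (R : realType) (n m : nat) (A : 'M[int]_n)
    (cor : 'M[R[i]]_(n, m)) (rts : 'M[R[i]]_(m, n)) : Prop :=
  [/\ m = (n + n - \rank (map_mx (fun z : int => z%:~R : R[i]) A))%N,
      row_free cor, row_free rts^T
    & cor *m rts = map_mx (fun z : int => z%:~R : R[i]) A].

Definition alpha (R : realType) (n m : nat) (rts : 'M[R[i]]_(m, n))
    (j : 'I_n) (h : 'rV[R[i]]_m) : R[i] := (h *m rts) 0 j.

Definition sgn (R : realType) (b : bool) : R[i] := if b then 1 else -1.
Definition sgnz (b : bool) : int := if b then 1 else -1.

Section Ops.
Variables (R : realType) (V : lmodType R[i]).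

Definition lin (f : V -> V) : Prop :=
  forall (c : R[i]) (u w : V), f (c *: u + w) = c *: f u + f w.

Definition comm (f g : V -> V) : V -> V := fun v => f (g v) - g (f v).
Definition acomm (f g : V -> V) : V -> V := fun v => f (g v) + g (f v).

Fixpoint nest (l : seq (V -> V)) (z : V -> V) : V -> V :=
  if l is y :: l' then comm y (nest l' z) else z.

Definition prodop (l : seq (V -> V)) : V -> V := foldr (fun f g => f \o g) id l.

Definition fin_dim (S : V -> Prop) : Prop :=
  exists b : seq V, forall v, S v ->
    exists c : 'I_(size b) -> R[i], v = \sum_(k < size b) c k *: b`_k.

(* Expansion at infinity of a rational function (valued in operators
   on the subspace S): f(u) = sum_{r>=0} f r u^{-r} is the expansion of
   g(u)/p(u) with p a nonzero scalar polynomial and g a polynomial,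
   i.e. p(u) f(u) has no negative powers of u.                          *)
Definition rational_at_infty (S : V -> Prop) (f : nat -> V -> V) : Prop :=
  exists p : {poly R[i]}, p != 0 /\
    forall (N : nat) (v : V), (0 < N)%N -> S v ->
      \sum_(k < size p) p`_k *: f (N + k)%N v = 0.

(* fp(z) = sum_{r>=0} fp r z^{-r} and fm(z) = sum_{r>=0} fm r z^r are the
   expansions at z = infinity and z = 0 of the SAME rational function
   g(z)/p(z): p fp = p fm (= g, a polynomial) coefficientwise.          *)
Definition rational_infty_zero (S : V -> Prop) (fp fm : nat -> V -> V) : Prop :=
  exists p : {poly R[i]}, p != 0 /\
    forall (M : int) (v : V), S v ->
      \sum_(k < size p | M <= k%:Z) p`_k *: fp `|k%:Z - M|%N v
      = \sum_(k < size p | k%:Z <= M) p`_k *: fm `|M - k%:Z|%N v.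

End Ops.

(*   hact h = h,  xi i r = xi_{i,r},  x b i r = x^{+/-}_{i,r}            *)
(*   (b = true for +, b = false for -)                                 *)
Section Yangian.
Variables (R : realType) (n m : nat) (A : 'M[int]_n) (d : 'I_n -> nat)
  (cor : 'M[R[i]]_(n, m)) (rts : 'M[R[i]]_(m, n)) (hbar : R[i])
  (V : lmodType R[i]) (hact : 'rV[R[i]]_m -> V -> V)
  (xi : 'I_n -> nat -> V -> V) (x : bool -> 'I_n -> nat -> V -> V).

Definition Yangian_module : Prop :=
  ((forall h, lin (hact h)) /\ (forall i r, lin (xi i r)) /\
      (forall b i r, lin (x b i r))) /\
  ((forall (c : R[i]) h h' v, hact (c *: h + h') v = c *: hact h v + hact h' v)) /\
  (
      (forall i v, xi i 0 v = hact ((d i)%:R *: row i cor) v)) /\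
  (
      (forall i j r s v, comm (xi i r) (xi j s) v = 0) /\
      (forall h i r v, comm (hact h) (xi i r) v = 0) /\
      (forall h h' v, comm (hact h) (hact h') v = 0)) /\
  (
      (forall h b j s v,
         comm (hact h) (x b j s) v = (sgn R b * alpha rts j h) *: x b j s v)) /\
  (
      (forall b i j r s v,
         comm (xi i r.+1) (x b j s) v - comm (xi i r) (x b j s.+1) v
         = (sgn R b * hbar * (d i)%:R * (A i j)%:~R / 2) *: acomm (xi i r) (x b j s) v)) /\
  (
      (forall b i j r s v,
         comm (x b i r.+1) (x b j s) v - comm (x b i r) (x b j s.+1) v
         = (sgn R b * hbar * (d i)%:R * (A i j)%:~R / 2) *: acomm (x b i r) (x b j s) v)) /\
  (
      (forall i j r s v,
         comm (x true i r) (x false j s) v = if i == j then xi i (r + s)%N v else 0)) /\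
  (
      (forall b i j, i != j ->
         forall (r : 'I_`|1 - A i j|%N -> nat) (s : nat) (v : V),
         \sum_(sigma : 'S_`|1 - A i j|%N)
            nest [seq x b i (r (sigma k)) | k <- enum 'I_`|1 - A i j|%N] (x b j s) v
         = 0)).

Definition hwt (mu : 'cV[R[i]]_m) (v : V) : Prop :=
  forall h, hact h v = (h *m mu) 0 0 *: v.

Definition h_semisimple_findim : Prop :=
  (forall v : V, exists (N : nat) (mus : 'I_N -> 'cV[R[i]]_m) (vs : 'I_N -> V),
      v = \sum_(k < N) vs k /\ forall k, hwt (mus k) (vs k))
  /\ (forall mu, fin_dim (hwt mu)).

(* the series  1 + hbar sum_r g r u^{-r-1}  (c0 = id) or
               hbar sum_r g r u^{-r-1}      (c0 = 0), as coefficient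
   sequences of u^{-k}, k >= 0 *)
Definition useries (c0 : V -> V) (g : nat -> V -> V) : nat -> V -> V :=
  fun k => if k is r.+1 then (fun v => hbar *: g r v) else c0.

End Yangian.

(*   Kact h = K_h,  Psi true i r = Psi^+_{i,r},  Psi false i r = Psi^-_{i,-r},
   X b i k = X^{+/-}_{i,k}   (k : int).
   qpow a stands for q^a (a in C): a fixed additive-to-multiplicative
   branch with qpow 1 = q.                                             *)

Definition qint (R : realType) (q : R[i]) (k : nat) : R[i] :=
  (q ^+ k - q^-1 ^+ k) / (q - q^-1).
Definition qfact (R : realType) (q : R[i]) (k : nat) : R[i] :=
  \prod_(1 <= l < k.+1) qint q l.
Definition qbinom (R : realType) (q : R[i]) (N s : nat) : R[i] :=
  qfact q N / (qfact q s * qfact q (N - s)).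

Section QLoop.
Variables (R : realType) (n m : nat) (A : 'M[int]_n) (d : 'I_n -> nat)
  (cor : 'M[R[i]]_(n, m)) (rts : 'M[R[i]]_(m, n)) (q : R[i]) (qpow : R[i] -> R[i])
  (W : lmodType R[i]) (Kact : 'rV[R[i]]_m -> W -> W)
  (Psi : bool -> 'I_n -> nat -> W -> W) (X : bool -> 'I_n -> int -> W -> W).

Definition qi (i : 'I_n) : R[i] := q ^+ d i.

Definition PsiZ (e : bool) (i : 'I_n) (k : int) : W -> W :=
  if e then (if 0 <= k then Psi true i `|k|%N else fun _ => 0)
  else (if k <= 0 then Psi false i `|k|%N else fun _ => 0).

Definition QL_module : Prop :=
  ((forall h, lin (Kact h)) /\ (forall e i r, lin (Psi e i r)) /\
      (forall b i k, lin (X b i k))) /\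
  (
      (forall i v, Psi true i 0 v = Kact ((d i)%:R *: row i cor) v /\
                   Psi false i 0 v = Kact (- (d i)%:R *: row i cor) v)) /\
  (
      (forall e e' i j r s v, comm (Psi e i r) (Psi e' j s) v = 0) /\
      (forall h e i r v, comm (Kact h) (Psi e i r) v = 0) /\
      (forall h h' v, Kact h (Kact h' v) = Kact (h + h') v) /\
      (forall v, Kact 0 v = v)) /\
  (
      (forall h b i k v,
         Kact h (X b i k (Kact (- h) v)) = qpow (sgn R b * alpha rts i h) *: X b i k v)) /\
  (
      (forall e b i j (k l : int) v,
         PsiZ e i (k + 1) (X b j l v) - (qi i ^ (sgnz b * A i j)) *: X b j l (PsiZ e i (k + 1) v)
         = (qi i ^ (sgnz b * A i j)) *: PsiZ e i k (X b j (l + 1) v) - X b j (l + 1) (PsiZ e i k v))) /\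
  (
      (forall b i j (k l : int) v,
         X b i (k + 1) (X b j l v) - (qi i ^ (sgnz b * A i j)) *: X b j l (X b i (k + 1) v)
         = (qi i ^ (sgnz b * A i j)) *: X b i k (X b j (l + 1) v) - X b j (l + 1) (X b i k v))) /\
  (
      (forall i j (k l : int) v,
         comm (X true i k) (X false j l) v
         = if i == j then (qi i - (qi i)^-1)^-1 *: (PsiZ true i (k + l) v - PsiZ false i (k + l) v)
           else 0)) /\
  (
      (forall b i j, i != j ->
         forall (k : 'I_`|1 - A i j|%N -> int) (l : int) (v : W),
         \sum_(sigma : 'S_`|1 - A i j|%N) \sum_(s < `|1 - A i j|%N.+1)
            ((-1) ^+ s * qbinom (qi i) `|1 - A i j|%N s) *:
              prodop (let ys := [seq X b i (k (sigma t)) | t <- enum 'I_`|1 - A i j|%N] in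
                      take s ys ++ X b j l :: drop s ys) v
         = 0)).

Definition Kwt (lam : 'rV[R[i]]_m -> R[i]) (v : W) : Prop :=
  forall h, Kact h v = lam h *: v.

Definition K_semisimple_findim : Prop :=
  (forall v : W, exists (N : nat) (lams : 'I_N -> 'rV[R[i]]_m -> R[i]) (vs : 'I_N -> W),
      v = \sum_(k < N) vs k /\ forall k, Kwt (lams k) (vs k))
  /\ (forall lam, fin_dim (Kwt lam)).

(* the weight mu + b alpha_i, multiplicatively: h |-> lam(h) q^{+/- alpha_i(h)} *)
Definition shiftwt (lam : 'rV[R[i]]_m -> R[i]) (b : bool) (i : 'I_n) :
  'rV[R[i]]_m -> R[i] := fun h => lam h * qpow (sgn R b * alpha rts i h).

(* X_i^b(z)^- = - sum_{k<0} X_{i,k} z^{-k}, as coefficients of z^r, r >= 0 *)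
Definition Xminus (b : bool) (i : 'I_n) : nat -> W -> W :=
  fun r => if r is _.+1 then (fun v => - X b i (- (r%:Z)) v) else (fun _ => 0).

End QLoop.

(* Main.v *)
Require Import Defs.
From mathcomp Require Import all_boot all_order all_algebra all_fingroup.
From mathcomp Require Import reals complex.
From Stdlib Require Import ClassicalEpsilon Classical.
From mathcomp Require Import zify ring.
Set Implicit Arguments.
Unset Strict Implicit.
Unset Printing Implicit Defensive.
Import Order.TTheory GRing.Theory Num.Theory.
Local Open Scope ring_scope.

Section Gen.
Variables (R : realType) (V : lmodType R[i]).
Local Notation F := (R[i]).

Lemma lin0 (f : V -> V) : lin f -> f 0 = 0.
Proof.
move=> H; have := H 1 0 0; rewrite !scale1r addr0 => e.
by apply: (@addrI _ (f 0)); rewrite addr0 -e.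
Qed.

Lemma linD (f : V -> V) u w : lin f -> f (u + w) = f u + f w.
Proof. by move=> H; rewrite -{1}(scale1r u) H scale1r. Qed.

Lemma linZ (f : V -> V) c u : lin f -> f (c *: u) = c *: f u.
Proof. by move=> H; rewrite -[c *: u]addr0 H lin0 // addr0. Qed.

Lemma linN (f : V -> V) u : lin f -> f (- u) = - f u.
Proof. by move=> H; rewrite -scaleN1r linZ // scaleN1r. Qed.

Lemma linB (f : V -> V) u w : lin f -> f (u - w) = f u - f w.
Proof. by move=> H; rewrite linD // linN. Qed.

Lemma lin_sum (f : V -> V) (I : Type) (r : seq I) (P : pred I) (G : I -> V) :
  lin f -> f (\sum_(i <- r | P i) G i) = \sum_(i <- r | P i) f (G i).
Proof. move=> H; exact: (big_morph f (fun u w => linD u w H) (lin0 H)). Qed.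

Lemma lin_B (f g : V -> V) : lin f -> lin g -> lin (fun v => f v - g v).
Proof. by move=> Hf Hg c u w; rewrite Hf Hg scalerBr opprD addrACA. Qed.

Lemma lin_Z (k : F) (f : V -> V) : lin f -> lin (fun v => k *: f v).
Proof. by move=> Hf c u w; rewrite Hf scalerDr !scalerA mulrC. Qed.

Lemma lin_C (f g : V -> V) : lin f -> lin g -> lin (fun v => f (g v)).
Proof. by move=> Hf Hg c u w; rewrite Hg Hf. Qed.

Lemma lin_N (f : V -> V) : lin f -> lin (fun v => - f v).
Proof. by move=> Hf c u w; rewrite Hf opprD scalerN. Qed.

Definition in_span (b : seq V) (v : V) :=
  exists c : nat -> F, v = \sum_(k < size b) c k *: b`_k.

Lemma dep_rows (T : finType) (J : nat) (c : 'I_J -> T -> F) :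
  (#|T| < J)%N -> exists y : 'I_J -> F, (exists j, y j != 0) /\
    forall tau, \sum_j y j * c j tau = 0.
Proof.
move=> hJ.
pose C : 'M[F]_(J, #|T|) := \matrix_(j, k) c j (enum_val k).
have hKC := mulmx_ker C; have hrk := mxrank_ker C.
move: hKC hrk; generalize (kermx C) => K hKC hrk.
have hK : K != 0.
  rewrite -mxrank_eq0 hrk -lt0n subn_gt0.
  exact: leq_ltn_trans (rank_leq_col C) hJ.
have [k [j0 hk]] : exists k j, K k j != 0.
  apply: NNPP => hn; apply: (negP hK); apply/eqP/matrixP => k j; rewrite [in RHS]mxE.
  case: (eqVneq (K k j) 0) => [//|hk]; exfalso; apply: hn; by exists k, j.
exists (fun j => K k j); split; first by exists j0.
move=> tau; have := congr1 (fun M : 'M_(J, #|T|) => M k (enum_rank tau)) hKC.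
rewrite /= !mxE => e; rewrite -[RHS]e; apply: eq_bigr => j _; by rewrite mxE enum_rankK.
Qed.

Lemma core_dep (s J : nat) (b : seq V) (u : nat -> nat -> V) :
  (s * size b < J)%N -> (forall j t, (j < J)%N -> (t < s)%N -> in_span b (u j t)) ->
  exists y : nat -> F, (exists j, (j < J)%N /\ y j != 0) /\
    forall t, (t < s)%N -> \sum_(j < J) y j *: u j t = 0.
Proof.
move=> hJ hs.
have hs' : forall j t, exists c : nat -> F, (j < J)%N -> (t < s)%N ->
    u j t = \sum_(k < size b) c k *: b`_k.
  move=> j t; case: (boolP ((j < J) && (t < s))%N) => [/andP [hj ht]|hn].
  - by case: (hs j t hj ht) => c hc; exists c.
  - by exists (fun _ => 0) => hj ht; rewrite hj ht in hn.
pose co j t := proj1_sig (constructive_indefinite_description _ (hs' j t)).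
have hco j t : (j < J)%N -> (t < s)%N -> u j t = \sum_(k < size b) co j t k *: b`_k.
  exact: (proj2_sig (constructive_indefinite_description _ (hs' j t))).
have := @dep_rows ('I_s * 'I_(size b))%type J (fun j tk => co j tk.1 tk.2).
case=> [|y [[j0 hj0] hy]]; first by rewrite card_prod !card_ord.
have hins (j : 'I_J) : insubd j0 (nat_of_ord j) = j.
  by apply: val_inj; rewrite val_insubd ltn_ord.
exists (fun n => if (n < J)%N then y (insubd j0 n) else 0); split.
  by exists j0; rewrite ltn_ord hins.
move=> t ht.
under eq_bigr => j _ do rewrite (hco _ _ (ltn_ord j) ht) scaler_sumr.
rewrite exchange_big big1 //= => k _.
under eq_bigr => j _ do rewrite scalerA.
rewrite -scaler_suml.
have -> : \sum_(j < J) (if (j < J)%N then y (insubd j0 j) else 0) * co j t k = 0.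
  rewrite -[RHS](hy (Ordinal ht, k)); apply: eq_bigr => j _ /=.
  by rewrite ltn_ord hins.
by rewrite scale0r.
Qed.

Lemma fd_dep (w b : seq V) (a : nat -> V -> V) :
  (forall j, lin (a j)) ->
  (forall j t, (t < size w)%N -> in_span b (a j w`_t)) ->
  exists K (y : nat -> F), (exists j, (j <= K)%N /\ y j != 0) /\
    forall v, in_span w v -> \sum_(j < K.+1) y j *: a j v = 0.
Proof.
move=> hl hs.
have [y [[j0 [hj0 hy0]] hy]] := @core_dep (size w) (size w * size b).+1 b
   (fun j t => a j w`_t) (ltnSn _) (fun j t _ ht => hs j t ht).
exists (size w * size b)%N, y; split; first by exists j0.
move=> v [e ->].
have -> : \sum_(j < (size w * size b).+1) y j *: a j (\sum_(t < size w) e t *: w`_t)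
    = \sum_(t < size w) e t *: \sum_(j < (size w * size b).+1) y j *: a j w`_t.
  under eq_bigr => j _ do rewrite (lin_sum _ _ _ (hl j)) scaler_sumr.
  rewrite exchange_big /=; apply: eq_bigr => t _; rewrite scaler_sumr.
  by apply: eq_bigr => j _; rewrite (linZ _ _ (hl _)) !scalerA mulrC.
by rewrite big1 // => t _; rewrite hy ?scaler0.
Qed.


Lemma in_span0 (b : seq V) : in_span b 0.
Proof. by exists (fun _ => 0); rewrite big1 // => k _; rewrite scale0r. Qed.

Lemma in_span_catl (b1 b2 : seq V) v : in_span b1 v -> in_span (b1 ++ b2) v.
Proof.
move=> [c ->]; exists (fun k => if (k < size b1)%N then c k else 0).
rewrite size_cat big_split_ord /= [X in _ = _ + X]big1 ?addr0.
  by apply: eq_bigr => k _; rewrite /= ltn_ord nth_cat ltn_ord.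
by move=> k _; rewrite /= ltnNge leq_addr /= scale0r.
Qed.

Lemma in_span_catr (b1 b2 : seq V) v : in_span b2 v -> in_span (b1 ++ b2) v.
Proof.
move=> [c ->]; exists (fun k => if (k < size b1)%N then 0 else c (k - size b1)%N).
rewrite size_cat big_split_ord /= [X in _ = X + _]big1 ?add0r.
  by apply: eq_bigr => k _; rewrite /= ltnNge leq_addr /= nth_cat ltnNge leq_addr /= addKn.
by move=> k _; rewrite /= ltn_ord scale0r.
Qed.

Lemma fin_dim_span (S : V -> Prop) : fin_dim S -> exists b, forall v, S v -> in_span b v.
Proof.
move=> [b hb]; exists b => v /hb [c ->].
exists (fun n => if insub n is Some k then c k else 0).
by apply: eq_bigr => k _; rewrite valK.
Qed.

Definition subsp (S : V -> Prop) :=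
  S 0 /\ (forall (c : F) u w, S u -> S w -> S (c *: u + w)).

Definition indep (w : seq V) :=
  forall c : nat -> F, \sum_(k < size w) c k *: w`_k = 0 ->
    forall k, (k < size w)%N -> c k = 0.

Lemma indep_bound (w b : seq V) : indep w ->
  (forall t, (t < size w)%N -> in_span b w`_t) -> (size w <= size b)%N.
Proof.
move=> hi hs; rewrite leqNgt; apply/negP => hlt.
have hlt' : (1 * size b < size w)%N by rewrite mul1n.
have [y [[j0 [hj0 hy0]] hy]] := @core_dep 1 (size w) b (fun j _ => w`_j)
   hlt' (fun j t hj _ => hs j hj).
have h0 := hy 0%N isT.
have := hi y h0 j0 hj0.
by move/eqP: hy0.
Qed.

Lemma indep_rcons (w : seq V) v : indep w -> ~ in_span w v -> indep (rcons w v).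
Proof.
move=> hi hv c; rewrite size_rcons big_ord_recr /= nth_rcons ltnn eqxx.
under eq_bigr => k _ do rewrite nth_rcons ltn_ord.
move=> hsum.
have hcs : c (size w) = 0.
  apply: NNPP => hc; apply: hv; exists (fun k => - (c k / c (size w))).
  have hc' : c (size w) != 0 by apply/eqP.
  have e : c (size w) *: v = - \sum_(k < size w) c k *: w`_k.
    by apply/eqP; rewrite -addr_eq0 addrC hsum.
  rewrite -(scalerK hc' v) e scalerN scaler_sumr -sumrN.
  by apply: eq_bigr => k _; rewrite scalerA -scaleNr mulrC.
rewrite hcs scale0r addr0 in hsum.
move=> k; rewrite ltnS leq_eqVlt => /orP [/eqP -> //|hk].
exact: (hi c hsum k hk).
Qed.

Lemma span_in (S : V -> Prop) : subsp S -> fin_dim S ->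
  exists w : seq V, (forall t, (t < size w)%N -> S w`_t) /\ forall v, S v -> in_span w v.
Proof.
move=> [S0 Sc] /fin_dim_span [b hb].
apply: NNPP => hn.
have step : forall w : seq V, (forall t, (t < size w)%N -> S w`_t) ->
    exists v, S v /\ ~ in_span w v.
  move=> w hw; apply: NNPP => h; apply: hn; exists w; split=> // v Sv.
  apply: NNPP => h2; apply: h; by exists v.
have bigw : forall n, exists w : seq V, size w = n /\
    (forall t, (t < size w)%N -> S w`_t) /\ indep w.
  elim=> [|n [w [hs [hw hi]]]].
    exists [::]; split; first by [].
    by split=> [t|c _ k]; rewrite ltn0.
  have [v [Sv hv]] := step w hw.
  exists (rcons w v); split; first by rewrite size_rcons hs.
  split; last exact: indep_rcons.
  move=> t; rewrite size_rcons ltnS leq_eqVlt => /orP [/eqP ->|ht].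
    by rewrite nth_rcons ltnn eqxx.
  by rewrite nth_rcons ht; apply: hw.
have [w [hs [hw hi]]] := bigw (size b).+1.
have hsp : forall t, (t < size w)%N -> in_span b w`_t.
  by move=> t ht; apply: hb; apply: hw.
have := indep_bound hi hsp.
by rewrite hs ltnn.
Qed.

Lemma sum_widen (p : {poly F}) n (G : nat -> V) : (size p <= n)%N ->
  \sum_(k < size p) p`_k *: G k = \sum_(k < n) p`_k *: G k.
Proof.
move=> h; rewrite (big_ord_widen n (fun k => p`_k *: G k) h) big_mkcond.
apply: eq_bigr => k _; case: ifP => // /negbT; rewrite -leqNgt => hk.
by rewrite nth_default // scale0r.
Qed.

Lemma rec_poly (S1 S2 T1 T2 : V -> Prop) (a : nat -> V -> V) :
  subsp S1 -> subsp S2 -> fin_dim S1 -> fin_dim S2 -> fin_dim T1 -> fin_dim T2 ->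
  (forall j, lin (a j)) -> (forall j v, S1 v -> T1 (a j v)) ->
  (forall j v, S2 v -> T2 (a j v)) ->
  exists p : {poly F}, p != 0 /\
    forall v, S1 v \/ S2 v -> \sum_(k < size p) p`_k *: a k v = 0.
Proof.
move=> s1 s2 f1 f2 g1 g2 hl h1 h2.
have [w1 [hw1 sw1]] := span_in s1 f1.
have [w2 [hw2 sw2]] := span_in s2 f2.
have [b1 hb1] := fin_dim_span g1.
have [b2 hb2] := fin_dim_span g2.
have hs : forall j t, (t < size (w1 ++ w2))%N -> in_span (b1 ++ b2) (a j (w1 ++ w2)`_t).
  move=> j t; rewrite size_cat nth_cat; case: ifP => ht1 ht.
    by apply/in_span_catl/hb1/h1/hw1.
  apply/in_span_catr/hb2/h2/hw2.
  rewrite ltn_subLR; first exact: ht.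
  by rewrite leqNgt ht1.
have [K [y [[j0 [hj0 hy0]] hy]]] := @fd_dep (w1 ++ w2) (b1 ++ b2) a hl hs.
exists (\poly_(j < K.+1) y j); split.
  apply/eqP => /(congr1 (fun p : {poly F} => p`_j0)).
  by rewrite coef_poly ltnS hj0 coef0; apply/eqP.
move=> v hv.
have hin : in_span (w1 ++ w2) v.
  by case: hv => [/sw1 /in_span_catl | /sw2 /in_span_catr].
rewrite (sum_widen (fun k => a k v) (size_poly _ _)) -[RHS](hy v hin).
by apply: eq_bigr => k _; rewrite coef_poly ltn_ord.
Qed.

Lemma step_gen (P : V -> Prop) (p : {poly F}) (A B : nat -> V -> V) (H : V -> V) (c : F) :
  lin H -> (forall v, P v -> P (H v)) -> (forall k v, B k v = c *: comm H (A k) v) ->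
  (forall v, P v -> \sum_(k < size p) p`_k *: A k v = 0) ->
  forall v, P v -> \sum_(k < size p) p`_k *: B k v = 0.
Proof.
move=> hH hP hB hA v Pv.
have e : \sum_(k < size p) p`_k *: B k v =
   c *: (H (\sum_(k < size p) p`_k *: A k v) - \sum_(k < size p) p`_k *: A k (H v)).
  rewrite (lin_sum _ _ _ hH) -sumrB scaler_sumr; apply: eq_bigr => k _.
  by rewrite hB /comm (linZ _ _ hH) -scalerBr !scalerA mulrC.
by rewrite e (hA v Pv) (hA (H v) (hP v Pv)) (lin0 hH) subrr scaler0.
Qed.

Lemma propagate_nat (P : V -> Prop) (p : {poly F}) (a : nat -> V -> V) (H : V -> V) (c : F) :
  lin H -> (forall v, P v -> P (H v)) -> (forall j v, a j.+1 v = c *: comm H (a j) v) ->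
  (forall v, P v -> \sum_(k < size p) p`_k *: a k v = 0) ->
  forall l v, P v -> \sum_(k < size p) p`_k *: a (k + l)%N v = 0.
Proof.
move=> hH hP hrec h0; elim=> [|l IH] v Pv.
  by under eq_bigr do rewrite addn0; exact: h0.
refine (@step_gen P p (fun k => a (k + l)%N) (fun k => a (k + l.+1)%N) H c hH hP _ IH v Pv); move=> k w.
by rewrite addnS hrec.
Qed.

Lemma propagate_int (P : V -> Prop) (p : {poly F}) (G : int -> V -> V) (H H' : V -> V) (c c' : F) :
  lin H -> lin H' -> (forall v, P v -> P (H v)) -> (forall v, P v -> P (H' v)) ->
  (forall l v, G (l + 1) v = c *: comm H (G l) v) ->
  (forall l v, G l v = c' *: comm H' (G (l + 1)) v) ->
  (forall v, P v -> \sum_(k < size p) p`_k *: G k%:Z v = 0) ->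
  forall l v, P v -> \sum_(k < size p) p`_k *: G (k%:Z + l) v = 0.
Proof.
move=> hH hH' hP hP' hf hb h0.
have hpos : forall n v, P v -> \sum_(k < size p) p`_k *: G (k%:Z + n%:Z) v = 0.
  elim=> [|n IH] v Pv.
    by under eq_bigr do rewrite addr0; exact: h0.
  refine (@step_gen P p (fun k => G (k%:Z + n%:Z)) (fun k => G (k%:Z + n.+1%:Z)) H c hH hP _ IH v Pv); move=> k w.
  have -> : (k%:Z + n.+1%:Z = (k%:Z + n%:Z) + 1)%R by lia.
  exact: hf.
have hneg : forall n v, P v -> \sum_(k < size p) p`_k *: G (k%:Z - n%:Z) v = 0.
  elim=> [|n IH] v Pv.
    by under eq_bigr do rewrite subr0; exact: h0.
  refine (@step_gen P p (fun k => G (k%:Z - n%:Z)) (fun k => G (k%:Z - n.+1%:Z)) H' c' hH' hP' _ IH v Pv); move=> k w.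
  rewrite hb; congr (_ *: comm _ _ _); congr G.
  by lia.
case=> n v Pv; first exact: hpos.
by rewrite NegzE; exact: hneg.
Qed.

End Gen.

Lemma alpha_row (R : realType) (n m : nat) (A : 'M[int]_n) (cor : 'M[R[i]]_(n, m))
  (rts : 'M[R[i]]_(m, n)) (i j : 'I_n) (c : R[i]) :
  cor *m rts = map_mx (fun z : int => z%:~R : R[i]) A ->
  alpha rts j (c *: row i cor) = c * (A i j)%:~R.
Proof.
move=> h; rewrite /alpha -scalemxAl mxE -row_mul mxE h mxE //.
Qed.

Lemma alpha_col (R : realType) (n m : nat) (rts : 'M[R[i]]_(m, n)) (i : 'I_n) h :
  (h *m col i rts) 0 0 = alpha rts i h.
Proof. rewrite /alpha !mxE; apply: eq_bigr => k _; by rewrite mxE. Qed.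

Section P1.
Variables (R : realType) (V : lmodType R[i]).
Local Notation F := (R[i]).

Lemma yang_step (X0 X1 z z1 : V -> V) (c k lam : F) (v : V) :
  lin X0 -> lin z ->
  (forall w, X0 (z w) = z (X0 w) + c *: z w) ->
  (forall w, X0 (z1 w) = z1 (X0 w) + c *: z1 w) ->
  comm X1 z v - comm X0 z1 v = lam *: acomm X0 z v ->
  lam = k * c ->
  c *: z1 v = comm (fun w => X1 w - k *: X0 (X0 w)) z v.
Proof.
move=> hX0 hz E E1 Y3 hlam.
set u := z (X0 v); set w := z v; set e := z (X0 (X0 v)).
have e1 : X0 (X0 (z v)) = e + c *: u + c *: (u + c *: w).
  by rewrite E (linD _ _ hX0) (linZ _ _ hX0) !E.
have e2 : z (X1 v - k *: X0 (X0 v)) = z (X1 v) - k *: e.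
  by rewrite (linB _ _ hz) (linZ _ _ hz).
have e3 : comm X0 z1 v = c *: z1 v.
  by rewrite /comm E1 addrC addKr.
rewrite /acomm E e3 in Y3.
move/eqP: Y3; rewrite subr_eq => /eqP Y3.
rewrite /comm e2 e1.
have -> : X1 (z v) - k *: (e + c *: u + c *: (u + c *: w)) - (z (X1 v) - k *: e)
   = (X1 (z v) - z (X1 v)) - k *: (e + c *: u + c *: (u + c *: w) - e).
  rewrite scalerBr !opprB addrACA [RHS]addrACA; congr (_ + _); exact: addrC.
rewrite /comm in Y3; rewrite Y3 hlam -scalerA.
have -> : e + c *: u + c *: (u + c *: w) - e = c *: (u + c *: w + u).
  rewrite addrC !addrA addNr add0r -scalerDr; congr (_ *: _).
  by rewrite addrC.
by rewrite addrAC subrr add0r.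
Qed.


Lemma q_fwd (P Pm P1 Xl Xl1 : V -> V) (kap rho : F) v :
  lin Pm -> lin Xl -> kap != 0 ->
  (forall w, Pm (Xl w) = kap^-1 *: Xl (Pm w)) ->
  (forall w, Pm (Xl1 w) = kap^-1 *: Xl1 (Pm w)) ->
  (forall w, Pm (P w) = w) ->
  P1 (Xl v) - kap *: Xl (P1 v) = kap *: P (Xl1 v) - Xl1 (P v) ->
  comm (fun w => rho *: Pm (P1 w)) Xl v = (rho * (kap - kap^-1)) *: Xl1 v.
Proof.
move=> hPm hXl hk C1 C1' C2 QL.
have h := congr1 Pm QL.
rewrite !(linB _ _ hPm) !(linZ _ _ hPm) C1 C1' !C2 scalerA mulfV // scale1r in h.
rewrite -scalerBl in h.
by rewrite /comm (linZ _ _ hXl) -scalerBr h scalerA.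
Qed.

Lemma q_bwd (P Pm Q1 Xl Xl1 : V -> V) (kap rho : F) v :
  lin P -> lin Xl1 -> kap != 0 ->
  (forall w, P (Xl w) = kap *: Xl (P w)) ->
  (forall w, P (Xl1 w) = kap *: Xl1 (P w)) ->
  (forall w, P (Pm w) = w) ->
  Pm (Xl v) - kap *: Xl (Pm v) = kap *: Q1 (Xl1 v) - Xl1 (Q1 v) ->
  comm (fun w => - (rho *: P (Q1 w))) Xl1 v = (rho * (kap - kap^-1)) *: Xl v.
Proof.
move=> hP hX1 hk C1 C1' C2 QL.
have h := congr1 P QL.
rewrite !(linB _ _ hP) !(linZ _ _ hP) C1 C1' !C2 scalerA -scalerBr in h.
(* h : Xl v - (kap*kap) Xl v = kap *: (P (Q1 (Xl1 v)) - Xl1 (P (Q1 v))) *)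
have h2 : P (Q1 (Xl1 v)) - Xl1 (P (Q1 v)) = (kap^-1 * (1 - kap * kap)) *: Xl v.
  by rewrite -[LHS](scalerK hk) -h -[RHS]scalerA [in RHS]scalerBl scale1r.
rewrite /comm (linN _ hX1) (linZ _ _ hX1) opprK addrC -scalerBr -opprB h2.
rewrite scalerN scalerA -scaleNr; congr (_ *: _).
rewrite mulrBr mulr1 mulrA mulVf // mul1r; ring.
Qed.

End P1.

Lemma part_i (R : realType) (n m : nat) (A : 'M[int]_n) (d : 'I_n -> nat)
  (cor : 'M[R[i]]_(n, m)) (rts : 'M[R[i]]_(m, n))
  (hA : is_GCM A) (hd : is_symmetrising A d) (hreal : is_realization A cor rts) :
  forall (hbar : R[i]) (V : lmodType R[i]) (hact : 'rV[R[i]]_m -> V -> V)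
          (xi : 'I_n -> nat -> V -> V) (x : bool -> 'I_n -> nat -> V -> V),
     hbar != 0 ->
     Yangian_module A d cor rts hbar hact xi x ->
     h_semisimple_findim hact ->
     forall (mu : 'cV[R[i]]_m), (exists v : V, v != 0 /\ hwt hact mu v) ->
     forall i : 'I_n,
       let t := fun v : V => xi i 1%N v - (hbar / 2) *: xi i 0%N (xi i 0%N v) in
       (forall b r v, hwt hact mu v -> hwt hact (mu + sgn R b *: col i rts) (x b i r v)) /\
       rational_at_infty (hwt hact mu) (useries hbar id (xi i)) /\
       (forall b, rational_at_infty (hwt hact mu) (useries hbar (fun _ => 0) (x b i))) /\
       (forall b r v, hwt hact mu v ->
          useries hbar (fun _ => 0) (x b i) r.+1 v
          = (hbar * (sgn R b / (2 * (d i)%:R)) ^+ r) *: iter r (comm t) (x b i 0%N) v) /\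
       (forall k v, hwt hact mu v ->
          useries hbar id (xi i) k v
          = (if k == 0%N then v else 0)
            + comm (useries hbar (fun _ => 0) (x true i) k) (x false i 0%N) v).
Proof.
move=> hbar V hact xi x _ HY [_ hfd] mu _ i t.
case: HY => [[hl [xil xl]] [hadd [Y0 [[Y1a [Y1b Y1c]] [Y2 [Y3 [Y4 [Y5 Y6]]]]]]]].
have hcr : cor *m rts = map_mx (fun z : int => z%:~R : R[i]) A by case: hreal.
have Aii : A i i = 2 by case: hA.
have di0 : (d i)%:R != 0 :> R[i] by rewrite pnatr_eq0 -lt0n; case: hd.
have hsub : forall nu, subsp (hwt hact nu).
  move=> nu; split.
    by move=> h; rewrite (lin0 (hl h)) scaler0.
  move=> c u w hu hw h; by rewrite (hl h) hu hw scalerDr !scalerA [c * _]mulrC.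
have xiw : forall r nu v, hwt hact nu v -> hwt hact nu (xi i r v).
  move=> r nu v hv h; have := Y1b h i r v.
  rewrite /comm hv (linZ _ _ (xil i r)) => /eqP; rewrite subr_eq0; by move/eqP.
have tw : forall nu v, hwt hact nu v -> hwt hact nu (t v).
  move=> nu v hv; rewrite /t -scaleNr addrC.
  by apply: (proj2 (hsub nu)); apply: (xiw) => //; apply: (xiw).
have tl : lin t.
  exact: (lin_B (xil i 1) (lin_Z (hbar / 2) (lin_C (xil i 0) (xil i 0)))).
have hxw : forall b r nu v, hwt hact nu v -> hwt hact (nu + sgn R b *: col i rts) (x b i r v).
  move=> b r nu v hv h; have := Y2 h b i r v.
  rewrite /comm hv (linZ _ _ (xl b i r)) => /eqP; rewrite subr_eq => /eqP ->.
  rewrite -scalerDl; congr (_ *: _).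
  rewrite -alpha_col addrC mulmxDr -scalemxAr; by rewrite !mxE.
have hstep : forall b s v, x b i s.+1 v = (sgn R b / (2 * (d i)%:R)) *: comm t (x b i s) v.
  move=> b s v.
  have c0 : sgn R b * ((d i)%:R * (A i i)%:~R) != 0.
    by rewrite Aii; case: b; rewrite /sgn ?mul1r ?mulN1r ?oppr_eq0 mulf_neq0 // intr_eq0.
  have ci : (sgn R b * ((d i)%:R * (A i i)%:~R))^-1 = sgn R b / (2 * (d i)%:R).
    apply: (mulfI c0); rewrite mulfV // Aii.
    by case: b c0; rewrite /sgn => _; field.
  have E : forall s' w, xi i 0 (x b i s' w)
      = x b i s' (xi i 0 w) + (sgn R b * ((d i)%:R * (A i i)%:~R)) *: x b i s' w.
    move=> s' w; have := Y2 ((d i)%:R *: row i cor) b i s' w.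
    rewrite /comm -!Y0 (@alpha_row R n m A cor rts i i _ hcr) => /eqP; rewrite subr_eq => /eqP ->.
    by rewrite addrC.
  set c := sgn R b * ((d i)%:R * (A i i)%:~R).
  have key : c *: x b i s.+1 v = comm t (x b i s) v.
    apply: (@yang_step _ _ (xi i 0) (xi i 1) (x b i s) (x b i s.+1) c (hbar / 2)
       (sgn R b * hbar * (d i)%:R * (A i i)%:~R / 2) v (xil i 0) (xl b i s) (E s) (E s.+1)).
      exact: Y3.
    by rewrite /c; ring.
  by rewrite -ci -key scalerA mulVf // scale1r.
have hiter : forall b r v, x b i r v = (sgn R b / (2 * (d i)%:R)) ^+ r *: iter r (comm t) (x b i 0%N) v.
  move=> b; elim=> [|r IH] v; first by rewrite expr0 scale1r.
  rewrite hstep /comm !IH (linZ _ _ tl) -scalerBr scalerA -exprS.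
  done.
have Y5' : forall k w, xi i k w = x true i k (x false i 0%N w) - x false i 0%N (x true i k w).
  by move=> k w; have := Y5 i i k 0%N w; rewrite eqxx addn0 /comm => <-.
split.
  move=> b r v hv; exact: hxw.
split.
  have [p [p0 hp]] := @rec_poly R V (hwt hact mu) (hwt hact (mu + sgn R false *: col i rts))
     (hwt hact (mu + sgn R true *: col i rts))
     (hwt hact (mu + sgn R false *: col i rts + sgn R true *: col i rts))
     (x true i) (hsub _) (hsub _) (hfd _) (hfd _) (hfd _) (hfd _) (xl true i)
     (fun j v hv => hxw true j _ v hv) (fun j v hv => hxw true j _ v hv).
  have Ptw : forall v, hwt hact mu v \/ hwt hact (mu + sgn R false *: col i rts) v ->
      hwt hact mu (t v) \/ hwt hact (mu + sgn R false *: col i rts) (t v).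
    by move=> v [hv|hv]; [left|right]; apply: tw.
  have hz := @propagate_nat R V _ p (x true i) t _ tl Ptw (fun j v => hstep true j v) hp.
  exists p; split => // N v hN hv.
  case: N hN => // N _.
  transitivity (hbar *: (\sum_(k < size p) p`_k *: x true i (k + N)%N (x false i 0%N v)
        - x false i 0%N (\sum_(k < size p) p`_k *: x true i (k + N)%N v))).
    rewrite (lin_sum _ _ _ (xl false i 0%N)) -sumrB scaler_sumr; apply: eq_bigr => k _.
    rewrite addSn /useries /= Y5' (linZ _ _ (xl false i 0%N)) -scalerBr !scalerA.
    by rewrite [p`_k * _]mulrC addnC.
  rewrite (hz N v (or_introl hv)) (hz N (x false i 0%N v) (or_intror (hxw false 0%N mu v hv))).
  by rewrite (lin0 (xl false i 0%N)) subrr scaler0.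
split.
  move=> b.
  have [p [p0 hp]] := @rec_poly R V (hwt hact mu) (hwt hact mu)
     (hwt hact (mu + sgn R b *: col i rts)) (hwt hact (mu + sgn R b *: col i rts))
     (x b i) (hsub _) (hsub _) (hfd _) (hfd _) (hfd _) (hfd _) (xl b i)
     (fun j v hv => hxw b j _ v hv) (fun j v hv => hxw b j _ v hv).
  have Ptw : forall v, hwt hact mu v \/ hwt hact mu v -> hwt hact mu (t v) \/ hwt hact mu (t v).
    by move=> v [hv|hv]; left; apply: tw.
  have hz := @propagate_nat R V _ p (x b i) t _ tl Ptw (fun j v => hstep b j v) hp.
  exists p; split => // N v hN hv.
  case: N hN => // N _.
  transitivity (hbar *: \sum_(k < size p) p`_k *: x b i (k + N)%N v).
    rewrite scaler_sumr; apply: eq_bigr => k _.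
    by rewrite addSn /useries /= !scalerA mulrC addnC.
  by rewrite (hz N v (or_introl hv)) scaler0.
split.
  by move=> b r v _ /=; rewrite hiter scalerA.
move=> [|k] v _.
  by rewrite /useries /comm /= (lin0 (xl false i 0%N)) subrr addr0.
rewrite /useries /= add0r /comm (linZ _ _ (xl false i 0%N)) -scalerBr.
by have := Y5 i i k 0%N v; rewrite eqxx addn0 /comm => ->.
Qed.

Lemma part_ii (R : realType) (n m : nat) (A : 'M[int]_n) (d : 'I_n -> nat)
  (cor : 'M[R[i]]_(n, m)) (rts : 'M[R[i]]_(m, n))
  (hA : is_GCM A) (hd : is_symmetrising A d) (hreal : is_realization A cor rts) :
  forall (q : R[i]) (qpow : R[i] -> R[i]),
     q != 0 -> (forall k : nat, (0 < k)%N -> q ^+ k != 1) ->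
     qpow 1 = q -> (forall a b : R[i], qpow (a + b) = qpow a * qpow b) ->
     forall (W : lmodType R[i]) (Kact : 'rV[R[i]]_m -> W -> W)
            (Psi : bool -> 'I_n -> nat -> W -> W) (X : bool -> 'I_n -> int -> W -> W),
     QL_module A d cor rts q qpow Kact Psi X ->
     K_semisimple_findim Kact ->
     forall (lam : 'rV[R[i]]_m -> R[i]), (exists v : W, v != 0 /\ Kwt Kact lam v) ->
     forall i : 'I_n,
       let qq := qi d q i in
       let H1 := fun v : W => (qq - qq^-1)^-1 *: Psi false i 0%N (Psi true i 1%N v) in
       let Hm1 := fun v : W => - ((qq - qq^-1)^-1 *: Psi true i 0%N (Psi false i 1%N v)) in
       (forall b k v, Kwt Kact lam v -> Kwt Kact (shiftwt rts qpow lam b i) (X b i k v)) /\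
       rational_infty_zero (Kwt Kact lam) (Psi true i) (Psi false i) /\
       (forall b, rational_infty_zero (Kwt Kact lam) (fun r => X b i r%:Z) (Xminus X b i)) /\
       (forall b r v, Kwt Kact lam v ->
          X b i r%:Z v = (sgn R b / (qq + qq^-1)) ^+ r *: iter r (comm H1) (X b i 0) v) /\
       (forall b r v, Kwt Kact lam v ->
          Xminus X b i r.+1 v
          = - ((sgn R b / (qq + qq^-1)) ^+ r *: iter r (comm Hm1) (X b i (-1)) v)) /\
       (forall r v, Kwt Kact lam v ->
          Psi true i r v = (if r == 0%N then Psi false i 0%N v else 0)
                           + (qq - qq^-1) *: comm (X true i r%:Z) (X false i 0) v) /\
       (forall r v, Kwt Kact lam v ->
          Psi false i r v = (if r == 0%N then Psi false i 0%N v else 0)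
                           + (qq - qq^-1) *: comm (Xminus X true i r) (X false i 0) v).
Proof.
move=> q qpow q0 qk qp1 qadd W Kact Psi X HQ [_ hfd] lam _ i qq H1 Hm1.
case: HQ => [[kl [psil Xl]] [Q0 [[Q1a [Q1b [Q1c Q1d]]] [Q2 [Q3 [Q4 [Q5 Q6]]]]]]].
have hcr : cor *m rts = map_mx (fun z : int => z%:~R : R[i]) A by case: hreal.
have Aii : A i i = 2 by case: hA.
have di0 : (d i)%:R != 0 :> R[i] by rewrite pnatr_eq0 -lt0n; case: hd.
have qp0 : qpow 0 = 1.
  apply: (mulfI q0); rewrite mulr1 -{1 2}qp1 -qadd addr0 //.
have qpN : forall a, qpow (- a) = (qpow a)^-1.
  move=> a; have h : qpow a * qpow (- a) = 1 by rewrite -qadd subrr qp0.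
  have ha : qpow a != 0 by apply/eqP => h0; move: h; rewrite h0 mul0r => /eqP; rewrite eq_sym oner_eq0.
  by rewrite -[qpow (- a)]mul1r -(mulVf ha) -mulrA h mulr1.
have qpn : forall k : nat, qpow k%:R = q ^+ k.
  elim=> [|k IH]; first by rewrite qp0 expr0.
  by rewrite -natr1 qadd IH qp1 exprSr.
have qq0 : qq != 0 by rewrite /qq /qi expf_neq0.
have qqm : qq - qq^-1 != 0.
  rewrite subr_eq0; apply/negP => /eqP h.
  have : q ^+ (d i * 2) == 1.
    by rewrite exprM -/(qi d q i) -/qq expr2 {2}h mulfV.
  by apply/negP; apply: qk; rewrite muln_gt0 /=; case: hd => hd0 _ _; rewrite hd0.
have qqp : qq + qq^-1 != 0.
  apply/negP => /eqP h.
  have h2 : qq * qq = - 1.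
    have e : qq^-1 = - qq by apply/eqP; rewrite -addr_eq0 addrC h.
    by apply/eqP; rewrite -eqr_oppLR -mulrN -e mulfV.
  have : q ^+ (d i * 4) == 1.
    by rewrite exprM -/(qi d q i) -/qq (_ : 4 = 2 * 2)%N // exprM !expr2 h2 mulrNN mulr1.
  by apply/negP; apply: qk; rewrite muln_gt0 /=; case: hd => hd0 _ _; rewrite hd0.
have hsub : forall nu, subsp (Kwt Kact nu).
  move=> nu; split; first by move=> h; rewrite (lin0 (kl h)) scaler0.
  move=> c u w hu hw h; by rewrite (kl h) hu hw scalerDr !scalerA [c * _]mulrC.
have psiw : forall e r nu v, Kwt Kact nu v -> Kwt Kact nu (Psi e i r v).
  move=> e r nu v hv h; have := Q1b h e i r v.
  rewrite /comm hv (linZ _ _ (psil e i r)) => /eqP; rewrite subr_eq0; by move/eqP.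
have KX : forall h b k w, Kact h (X b i k w) = qpow (sgn R b * alpha rts i h) *: X b i k (Kact h w).
  by move=> h b k w; rewrite -Q2 Q1c addNr Q1d.
have hxw : forall b k nu v, Kwt Kact nu v -> Kwt Kact (shiftwt rts qpow nu b i) (X b i k v).
  by move=> b k nu v hv h; rewrite KX hv (linZ _ _ (Xl b i k)) scalerA /shiftwt mulrC.
pose kap b := qpow (sgn R b * ((d i)%:R * (A i i)%:~R)).
have P0 : forall w, Psi true i 0%N w = Kact ((d i)%:R *: row i cor) w.
  by move=> w; case: (Q0 i w).
have Pm0 : forall w, Psi false i 0%N w = Kact (- (d i)%:R *: row i cor) w.
  by move=> w; case: (Q0 i w).
have PX : forall b k w, Psi true i 0%N (X b i k w) = kap b *: X b i k (Psi true i 0%N w).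
  by move=> b k w; rewrite !P0 KX (@alpha_row R n m A cor rts i i _ hcr).
have PmX : forall b k w, Psi false i 0%N (X b i k w) = (kap b)^-1 *: X b i k (Psi false i 0%N w).
  by move=> b k w; rewrite !Pm0 KX (@alpha_row R n m A cor rts i i _ hcr) /kap -qpN mulNr mulrN.
have PPm : forall w, Psi true i 0%N (Psi false i 0%N w) = w.
  by move=> w; rewrite P0 Pm0 Q1c scaleNr addrN Q1d.
have PmP : forall w, Psi false i 0%N (Psi true i 0%N w) = w.
  by move=> w; rewrite P0 Pm0 Q1c scaleNr addNr Q1d.
have i2 : ((A i i)%:~R : R[i]) = 2%:R by rewrite Aii.
have kapT : kap true = qq ^+ 2.
  by rewrite /kap i2 /sgn mul1r -natrM qpn exprM.
have kapF : kap false = (qq ^+ 2)^-1.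
  by rewrite /kap i2 /sgn mulN1r qpN -natrM qpn exprM.
have kapE : forall b, qq ^ (sgnz b * A i i) = kap b.
  by case; rewrite ?kapT ?kapF /sgnz Aii.
have qq2 : qq ^+ 2 != 0 by rewrite expf_neq0.
have kap0 : forall b, kap b != 0 by case; rewrite ?kapT ?kapF ?invr_eq0.
have qqm' : qq * qq - 1 != 0 by rewrite -[X in _ - X](mulfV qq0) -mulrBr mulf_neq0.
have qqp' : qq * qq + 1 != 0 by rewrite -[X in _ + X](mulfV qq0) -mulrDr mulf_neq0.
have kapR : forall b, (qq - qq^-1)^-1 * (kap b - (kap b)^-1) = sgn R b * (qq + qq^-1).
  by case; rewrite ?kapT ?kapF /sgn ?invrK; field; rewrite qq0 /= ?qqm' ?qqp'.
have cK : forall b, sgn R b / (qq + qq^-1) * (sgn R b * (qq + qq^-1)) = 1.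
  by case; rewrite /sgn; field; rewrite qq0 /= ?qqm' ?qqp'.
pose cc b := sgn R b / (qq + qq^-1).
have H1l : lin H1 by exact: (lin_Z _ (lin_C (psil false i 0%N) (psil true i 1%N))).
have Hm1l : lin Hm1 by exact: (lin_N (lin_Z _ (lin_C (psil true i 0%N) (psil false i 1%N)))).
have H1w : forall nu v, Kwt Kact nu v -> Kwt Kact nu (H1 v).
  move=> nu v hv; rewrite /H1 -[X in Kwt _ _ X]addr0.
  by apply: (proj2 (hsub nu)); [apply: (psiw); apply: (psiw) | exact: (proj1 (hsub nu))].
have Hm1w : forall nu v, Kwt Kact nu v -> Kwt Kact nu (Hm1 v).
  move=> nu v hv; rewrite /Hm1 -scaleNr -[X in Kwt _ _ X]addr0.
  by apply: (proj2 (hsub nu)); [apply: (psiw); apply: (psiw) | exact: (proj1 (hsub nu))].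
have Xf : forall b l v, X b i (l + 1) v = cc b *: comm H1 (X b i l) v.
  move=> b l v.
  have QL := Q3 true b i i 0 l v.
  rewrite /PsiZ add0r ler01 lexx /= kapE in QL.
  have h := @q_fwd R W (Psi true i 0%N) (Psi false i 0%N) (Psi true i 1%N) (X b i l)
     (X b i (l + 1)) (kap b) ((qq - qq^-1)^-1) v (psil false i 0%N) (Xl b i l) (kap0 b)
     (PmX b l) (PmX b (l + 1)) PmP QL.
  rewrite kapR in h.
  have h' : comm H1 (X b i l) v = (sgn R b * (qq + qq^-1)) *: X b i (l + 1) v := h.
  by rewrite h' scalerA cK scale1r.
have Xb : forall b l v, X b i l v = cc b *: comm Hm1 (X b i (l + 1)) v.
  move=> b l v.
  have QL := Q3 false b i i (-1) l v.
  rewrite /PsiZ addNr lexx lerN10 /= kapE in QL.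
  have h := @q_bwd R W (Psi true i 0%N) (Psi false i 0%N) (Psi false i 1%N) (X b i l)
     (X b i (l + 1)) (kap b) ((qq - qq^-1)^-1) v (psil true i 0%N) (Xl b i (l + 1)) (kap0 b)
     (PX b l) (PX b (l + 1)) PPm QL.
  rewrite kapR in h.
  have h' : comm Hm1 (X b i (l + 1)) v = (sgn R b * (qq + qq^-1)) *: X b i l v := h.
  by rewrite h' scalerA cK scale1r.
have Xit : forall b r v, X b i r%:Z v = cc b ^+ r *: iter r (comm H1) (X b i 0) v.
  move=> b; elim=> [|r IH] v; first by rewrite expr0 scale1r.
  have -> : (r.+1)%:Z = r%:Z + 1 by lia.
  rewrite Xf /comm !IH (linZ _ _ H1l) -scalerBr scalerA -exprS.
  done.
have Xit' : forall b r v, X b i (- (r.+1)%:Z) v = cc b ^+ r *: iter r (comm Hm1) (X b i (-1)) v.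
  move=> b; elim=> [|r IH] v; first by rewrite expr0 scale1r.
  rewrite Xb.
  have -> : - (r.+2)%:Z + 1 = - (r.+1)%:Z by lia.
  rewrite /comm !IH (linZ _ _ Hm1l) -scalerBr scalerA -exprS.
  done.
have Q5' : forall k w, (qq - qq^-1) *: comm (X true i k) (X false i 0) w =
    (if 0 <= k then Psi true i (absz k) else fun _ => 0) w
    - (if k <= 0 then Psi false i (absz k) else fun _ => 0) w.
  by move=> k w; rewrite Q5 eqxx addr0 scalerA mulfV // scale1r.
split.
  by move=> b k v hv; exact: hxw.
split.
  have [p [p0 hp]] := @rec_poly R W (Kwt Kact lam) (Kwt Kact (shiftwt rts qpow lam false i))
     (Kwt Kact (shiftwt rts qpow lam true i))
     (Kwt Kact (shiftwt rts qpow (shiftwt rts qpow lam false i) true i))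
     (fun j => X true i j%:Z) (hsub _) (hsub _) (hfd _) (hfd _) (hfd _) (hfd _)
     (fun j => Xl true i j%:Z)
     (fun j v hv => hxw true _ _ v hv) (fun j v hv => hxw true _ _ v hv).
  have Pw : forall v, Kwt Kact lam v \/ Kwt Kact (shiftwt rts qpow lam false i) v ->
      Kwt Kact lam (H1 v) \/ Kwt Kact (shiftwt rts qpow lam false i) (H1 v).
    by move=> v [hv|hv]; [left|right]; apply: H1w.
  have Pw' : forall v, Kwt Kact lam v \/ Kwt Kact (shiftwt rts qpow lam false i) v ->
      Kwt Kact lam (Hm1 v) \/ Kwt Kact (shiftwt rts qpow lam false i) (Hm1 v).
    by move=> v [hv|hv]; [left|right]; apply: Hm1w.
  have hz := @propagate_int R W _ p (X true i) H1 Hm1 (cc true) (cc true) H1l Hm1l Pw Pw'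
     (Xf true) (Xb true) hp.
  exists p; split => // M v hv.
  apply/eqP; rewrite -subr_eq0; apply/eqP.
  rewrite big_mkcond [X in _ - X]big_mkcond -sumrB /=.
  transitivity (\sum_(k < size p) p`_k *: ((qq - qq^-1) *: comm (X true i (k%:Z - M)) (X false i 0) v)).
    apply: eq_bigr => k _; rewrite Q5'.
    rewrite -[M <= _]subr_ge0 -[_ <= M]subr_le0 -[`|M - _|%N]abszN opprB.
    move: (k%:Z - M) => z.
    case: ifP => h1; case: ifP => h2 /=.
    - by rewrite scalerBr.
    - by rewrite !subr0.
    - by rewrite !sub0r scalerN.
    - by rewrite subr0 scaler0.
  transitivity ((qq - qq^-1) *: (\sum_(k < size p) p`_k *: X true i (k%:Z + - M) (X false i 0 v)
      - X false i 0 (\sum_(k < size p) p`_k *: X true i (k%:Z + - M) v))).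
    rewrite (lin_sum _ _ _ (Xl false i 0)) -sumrB scaler_sumr; apply: eq_bigr => k _.
    by rewrite /comm (linZ _ _ (Xl false i 0)) -scalerBr !scalerA mulrC.
  rewrite (hz (- M) v (or_introl hv)) (hz (- M) _ (or_intror (hxw false 0 lam v hv))).
  by rewrite (lin0 (Xl false i 0)) subrr scaler0.
split.
  move=> b.
  have [p [p0 hp]] := @rec_poly R W (Kwt Kact lam) (Kwt Kact lam)
     (Kwt Kact (shiftwt rts qpow lam b i)) (Kwt Kact (shiftwt rts qpow lam b i))
     (fun j => X b i j%:Z) (hsub _) (hsub _) (hfd _) (hfd _) (hfd _) (hfd _)
     (fun j => Xl b i j%:Z)
     (fun j v hv => hxw b _ _ v hv) (fun j v hv => hxw b _ _ v hv).
  have Pw : forall v, Kwt Kact lam v \/ Kwt Kact lam v ->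
      Kwt Kact lam (H1 v) \/ Kwt Kact lam (H1 v).
    by move=> v [hv|hv]; left; apply: H1w.
  have Pw' : forall v, Kwt Kact lam v \/ Kwt Kact lam v ->
      Kwt Kact lam (Hm1 v) \/ Kwt Kact lam (Hm1 v).
    by move=> v [hv|hv]; left; apply: Hm1w.
  have hz := @propagate_int R W _ p (X b i) H1 Hm1 (cc b) (cc b) H1l Hm1l Pw Pw'
     (Xf b) (Xb b) hp.
  exists p; split => // M v hv.
  apply/eqP; rewrite -subr_eq0; apply/eqP.
  rewrite big_mkcond [X in _ - X]big_mkcond -sumrB /=.
  rewrite -[RHS](hz (- M) v (or_introl hv)).
  apply: eq_bigr => k _.
  rewrite -[M <= _]subr_ge0 -[_ <= M]subr_le0 -[`|M - _|%N]abszN opprB.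
  move: (k%:Z - M) => z.
  case: z => [[|nn]|nn].
  - by rewrite lexx /Xminus /= scaler0 subr0.
  - have h1 : (0 <= (nn.+1)%:Z) by lia.
    have h2 : ((nn.+1)%:Z <= 0) = false by apply/negbTE; rewrite -ltNge; lia.
    by rewrite h1 h2 subr0.
  - rewrite NegzE.
    have h1 : (0 <= - (nn.+1)%:Z) = false by apply/negbTE; rewrite -ltNge; lia.
    have h2 : (- (nn.+1)%:Z <= 0) by lia.
    by rewrite h1 h2 abszN /Xminus /= sub0r scalerN opprK.
split.
  by move=> b r v _; rewrite Xit.
split.
  by move=> b r v _; rewrite /Xminus Xit'.
split.
  move=> [|r] v _.
    by rewrite Q5' lexx /= addrC subrK.
  rewrite Q5' /=.
  have h1 : (0 <= (r.+1)%:Z) by lia.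
  have h2 : ((r.+1)%:Z <= 0) = false by apply/negbTE; rewrite -ltNge; lia.
  by rewrite subr0 add0r.
move=> [|r] v _.
  by rewrite /Xminus /comm /= (lin0 (Xl false i 0)) subrr scaler0 addr0.
rewrite /Xminus /=.
have e : comm (fun v => - X true i (- (r.+1)%:Z) v) (X false i 0) v
    = - comm (X true i (- (r.+1)%:Z)) (X false i 0) v.
  by rewrite /comm (linN _ (Xl false i 0)) opprD opprK.
rewrite e scalerN Q5'.
have h1 : (0 <= - (r.+1)%:Z) = false by apply/negbTE; rewrite -ltNge; lia.
have h2 : (- (r.+1)%:Z <= 0) by lia.
by rewrite h1 h2 /= !sub0r opprK.
Qed.

Theorem proposition3p6
  (R : realType) (n m : nat) (A : 'M[int]_n) (d : 'I_n -> nat)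
  (cor : 'M[R[i]]_(n, m)) (rts : 'M[R[i]]_(m, n))
  (hA : is_GCM A) (hd : is_symmetrising A d) (hreal : is_realization A cor rts) :
  (* (i) Yangian *)
  (forall (hbar : R[i]) (V : lmodType R[i]) (hact : 'rV[R[i]]_m -> V -> V)
          (xi : 'I_n -> nat -> V -> V) (x : bool -> 'I_n -> nat -> V -> V),
     hbar != 0 ->
     Yangian_module A d cor rts hbar hact xi x ->
     h_semisimple_findim hact ->
     forall (mu : 'cV[R[i]]_m), (exists v : V, v != 0 /\ hwt hact mu v) ->
     forall i : 'I_n,
       let t := fun v : V => xi i 1%N v - (hbar / 2) *: xi i 0%N (xi i 0%N v) in
       (* x^{+/-}_{i,r} map V_mu to V_{mu +/- alpha_i} *)
       (forall b r v, hwt hact mu v -> hwt hact (mu + sgn R b *: col i rts) (x b i r v)) /\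
       (* rationality of xi_i(u) and x_i^{+/-}(u) on V_mu *)
       rational_at_infty (hwt hact mu) (useries hbar id (xi i)) /\
       (forall b, rational_at_infty (hwt hact mu) (useries hbar (fun _ => 0) (x b i))) /\
       (* x_i^{+/-}(u) = hbar u^{-1} (1 -/+ ad(t_{i,1})/(2 d_i u))^{-1} x^{+/-}_{i,0} *)
       (forall b r v, hwt hact mu v ->
          useries hbar (fun _ => 0) (x b i) r.+1 v
          = (hbar * (sgn R b / (2 * (d i)%:R)) ^+ r) *: iter r (comm t) (x b i 0%N) v) /\
       (* xi_i(u) = 1 + [x_i^+(u), x^-_{i,0}] *)
       (forall k v, hwt hact mu v ->
          useries hbar id (xi i) k v
          = (if k == 0%N then v else 0)
            + comm (useries hbar (fun _ => 0) (x true i) k) (x false i 0%N) v))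
  /\
  (* (ii) quantum loop algebra *)
  (forall (q : R[i]) (qpow : R[i] -> R[i]),
     q != 0 -> (forall k : nat, (0 < k)%N -> q ^+ k != 1) ->
     qpow 1 = q -> (forall a b : R[i], qpow (a + b) = qpow a * qpow b) ->
     forall (W : lmodType R[i]) (Kact : 'rV[R[i]]_m -> W -> W)
            (Psi : bool -> 'I_n -> nat -> W -> W) (X : bool -> 'I_n -> int -> W -> W),
     QL_module A d cor rts q qpow Kact Psi X ->
     K_semisimple_findim Kact ->
     forall (lam : 'rV[R[i]]_m -> R[i]), (exists v : W, v != 0 /\ Kwt Kact lam v) ->
     forall i : 'I_n,
       let qq := qi d q i in
       let H1 := fun v : W => (qq - qq^-1)^-1 *: Psi false i 0%N (Psi true i 1%N v) in
       let Hm1 := fun v : W => - ((qq - qq^-1)^-1 *: Psi true i 0%N (Psi false i 1%N v)) in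
       (* X^{e}_{i,k} maps V_lam to V_{lam + e alpha_i} *)
       (forall b k v, Kwt Kact lam v -> Kwt Kact (shiftwt rts qpow lam b i) (X b i k v)) /\
       (* Psi_i(z)^{+/-} are the expansions at infinity / 0 of one rational function *)
       rational_infty_zero (Kwt Kact lam) (Psi true i) (Psi false i) /\
       (* X_i^{e}(z)^{+/-} are the expansions at infinity / 0 of one rational function *)
       (forall b, rational_infty_zero (Kwt Kact lam) (fun r => X b i r%:Z) (Xminus X b i)) /\
       (* X_i^e(z) = (1 - e ad(H_{i,1})/([2]_{q_i} z))^{-1} X^e_{i,0} (expansion at infinity) *)
       (forall b r v, Kwt Kact lam v ->
          X b i r%:Z v = (sgn R b / (qq + qq^-1)) ^+ r *: iter r (comm H1) (X b i 0) v) /\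
       (* X_i^e(z) = -z (1 - e z ad(H_{i,-1})/[2]_{q_i})^{-1} X^e_{i,-1} (expansion at 0) *)
       (forall b r v, Kwt Kact lam v ->
          Xminus X b i r.+1 v
          = - ((sgn R b / (qq + qq^-1)) ^+ r *: iter r (comm Hm1) (X b i (-1)) v)) /\
       (* Psi_i(z) = Psi^-_{i,0} + (q_i - q_i^{-1}) [X_i^+(z), X^-_{i,0}] at infinity and at 0 *)
       (forall r v, Kwt Kact lam v ->
          Psi true i r v = (if r == 0%N then Psi false i 0%N v else 0)
                           + (qq - qq^-1) *: comm (X true i r%:Z) (X false i 0) v) /\
       (forall r v, Kwt Kact lam v ->
          Psi false i r v = (if r == 0%N then Psi false i 0%N v else 0)
                           + (qq - qq^-1) *: comm (Xminus X true i r) (X false i 0) v)).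
Proof.
split.
  exact: (part_i hA hd hreal).
exact: (part_ii hA hd hreal).
Qed.
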